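(* Let $\lambda>0$ and let $H_3=\mathbb{R}^3$ with coordinates $(x,y,z)$ carry the Lorentzian metric $g_1=-\frac{1}{\lambda^2}dx^2+dy^2+(x\,dy+dz)^2$, with Levi-Civita connection $\nabla$. Let $e_1=\partial_z$, $e_2=\partial_y-x\partial_z$, $e_3=\lambda\partial_x$, and let $V_2=\partial_y\,(=xe_1+e_2)$. Then every $V_2$-magnetic curve $\gamma(t)=(x(t),y(t),z(t))$, i.e. every smooth curve with $\nabla_{\gamma'}\gamma'=V_2\wedge\gamma'$, satisfies the system $y''+x'(z'+xy')=-\frac{xx'}{\lambda}$, $(\lambda y'-1)(z'+xy')=-xy'-\frac{x''}{\lambda}$, $(z'+xy')'=\frac{x'}{\lambda}$.
   Context: $(e_1,e_2,e_3)$ is a $g_1$-orthonormal frame with $e_3$ timelike. For $X=\sum X^ie_i$, $Y=\sum Y^ie_i$ the vector product is defined in this frame by $X\wedge Y=(X^2Y^3-X^3Y^2)e_1+(X^3Y^1-X^1Y^3)e_2+(X^2Y^1-X^1Y^2)e_3$. Primes denote derivatives in $t$. *)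

(* Defs.v *)
From Stdlib Require Import Reals.
From Coquelicot Require Import Coquelicot.
Open Scope R_scope.

(* Coordinates on H_3 = R^3 are (x,y,z), indexed 0,1,2. *)

Definition sum3 (f : nat -> R) : R := f 0%nat + f 1%nat + f 2%nat.

Definition kron (i j : nat) : R := if Nat.eqb i j then 1 else 0.

(* coefficients of the 1-form x dy + dz *)
Definition theta (x : R) (i : nat) : R :=
  match i with 1%nat => x | 2%nat => 1 | _ => 0 end.

Definition g1 (lam x y z : R) (i j : nat) : R :=
  - / (lam ^ 2) * kron 0 i * kron 0 j + kron 1 i * kron 1 j
  + theta x i * theta x j.

Definition cof3 (M : nat -> nat -> R) (i j : nat) : R :=
  let i1 := ((i + 1) mod 3)%nat in let i2 := ((i + 2) mod 3)%nat in
  let j1 := ((j + 1) mod 3)%nat in let j2 := ((j + 2) mod 3)%nat in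
  M i1 j1 * M i2 j2 - M i1 j2 * M i2 j1.
Definition det3 (M : nat -> nat -> R) : R := sum3 (fun j => M 0%nat j * cof3 M 0%nat j).
Definition inv3 (M : nat -> nat -> R) (k l : nat) : R := cof3 M l k / det3 M.

Definition g1inv (lam x y z : R) (k l : nat) : R := inv3 (g1 lam x y z) k l.

Definition dpart (f : R -> R -> R -> R) (l : nat) (x y z : R) : R :=
  match l with
  | 0%nat => Derive (fun s => f s y z) x
  | 1%nat => Derive (fun s => f x s z) y
  | _ => Derive (fun s => f x y s) z
  end.

Definition Gamma (lam : R) (k i j : nat) (x y z : R) : R :=
  / 2 * sum3 (fun l => g1inv lam x y z k l *
     (dpart (fun a b c => g1 lam a b c j l) i x y z
      + dpart (fun a b c => g1 lam a b c i l) j x y z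
      - dpart (fun a b c => g1 lam a b c i j) l x y z)).

Definition ccoord (cx cy cz : R -> R) (k : nat) : R -> R :=
  match k with 0%nat => cx | 1%nat => cy | _ => cz end.

Definition cov_acc (lam : R) (cx cy cz : R -> R) (k : nat) (t : R) : R :=
  Derive_n (ccoord cx cy cz k) 2 t
  + sum3 (fun i => sum3 (fun j =>
      Gamma lam k i j (cx t) (cy t) (cz t)
      * Derive (ccoord cx cy cz i) t * Derive (ccoord cx cy cz j) t)).

Definition frame_e (lam x : R) (i k : nat) : R :=
  match i with
  | 0%nat => kron 2 k
  | 1%nat => kron 1 k - x * kron 2 k
  | _ => lam * kron 0 k
  end.

Definition frameE (lam x : R) (a : nat -> R) (k : nat) : R :=
  sum3 (fun i => a i * frame_e lam x i k).

(* vector product in frame components (index i = frame vector e_{i+1}) *)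
Definition wedge (a b : nat -> R) (k : nat) : R :=
  match k with
  | 0%nat => a 1%nat * b 2%nat - a 2%nat * b 1%nat
  | 1%nat => a 2%nat * b 0%nat - a 0%nat * b 2%nat
  | _ => a 1%nat * b 0%nat - a 0%nat * b 1%nat
  end.

Definition V2 (k : nat) : R := kron 1 k.

(* gamma is a V_2-magnetic curve: nabla_{gamma'} gamma' = V_2 /\ gamma',
   where V_2 and gamma' are expanded in the frame (e1,e2,e3). *)
Definition V2_magnetic (lam : R) (cx cy cz : R -> R) : Prop :=
  forall (t : R) (a b : nat -> R),
    (forall k, (k < 3)%nat -> frameE lam (cx t) a k = V2 k) ->
    (forall k, (k < 3)%nat -> frameE lam (cx t) b k = Derive (ccoord cx cy cz k) t) ->
    forall k, (k < 3)%nat -> cov_acc lam cx cy cz k t = frameE lam (cx t) (wedge a b) k.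

Definition smooth_fun (f : R -> R) : Prop := forall (n : nat) (t : R), ex_derive_n f n t.

(* Main.v *)
Require Import Defs.
From Stdlib Require Import Reals Lra Lia.
From Coquelicot Require Import Coquelicot.
Open Scope R_scope.

Definition dg (l i j : nat) (x : R) : R :=
  match l, i, j with
  | 0%nat, 1%nat, 1%nat => 2 * x
  | 0%nat, 1%nat, 2%nat => 1
  | 0%nat, 2%nat, 1%nat => 1
  | _, _, _ => 0 end.

Ltac dtac := apply is_derive_unique; auto_derive; [try tauto | ring].

Lemma dg_eq lam x y z i j l : (i < 3)%nat -> (j < 3)%nat -> (l < 3)%nat ->
  dpart (fun a b c => g1 lam a b c i j) l x y z = dg l i j x.
Proof.
intros Hi Hj Hl.
destruct i as [|[|[|i]]]; try lia; destruct j as [|[|[|j]]]; try lia;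
destruct l as [|[|[|l]]]; try lia;
cbv beta iota delta [dpart g1 kron theta Nat.eqb dg]; dtac.
Qed.

Definition Gam (lam : R) (k i j : nat) (x : R) : R :=
  match k, i, j with
  | 0%nat, 1%nat, 1%nat => lam^2 * x
  | 0%nat, 1%nat, 2%nat | 0%nat, 2%nat, 1%nat => lam^2 / 2
  | 1%nat, 0%nat, 1%nat | 1%nat, 1%nat, 0%nat => x / 2
  | 1%nat, 0%nat, 2%nat | 1%nat, 2%nat, 0%nat => 1 / 2
  | 2%nat, 0%nat, 1%nat | 2%nat, 1%nat, 0%nat => (1 - x^2) / 2
  | 2%nat, 0%nat, 2%nat | 2%nat, 2%nat, 0%nat => - x / 2
  | _, _, _ => 0 end.

Lemma Gamma_eq lam x y z k i j : lam <> 0 -> (k < 3)%nat -> (i < 3)%nat -> (j < 3)%nat ->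
  Gamma lam k i j x y z = Gam lam k i j x.
Proof.
intros Hl Hk Hi Hj. unfold Gamma, sum3.
rewrite !dg_eq by lia.
destruct k as [|[|[|k]]]; try lia; destruct i as [|[|[|i]]]; try lia;
destruct j as [|[|[|j]]]; try lia;
cbv beta iota delta [g1inv inv3 cof3 det3 sum3 g1 kron theta Nat.eqb dg Gam Nat.add Nat.modulo Nat.divmod fst snd]; idtac.
all: simpl; field; split; auto;
  replace (lam * lam + x * x * (lam * lam) - x * x * (lam * lam)) with (lam*lam) by ring;
  apply Rmult_integral_contrapositive; auto.
Qed.

Theorem mainTheorem2 (lam : R) (cx cy cz : R -> R) :
  0 < lam ->
  smooth_fun cx -> smooth_fun cy -> smooth_fun cz ->
  V2_magnetic lam cx cy cz ->
  forall t : R,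
    Derive_n cy 2 t + Derive cx t * (Derive cz t + cx t * Derive cy t)
      = - (cx t * Derive cx t) / lam
    /\ (lam * Derive cy t - 1) * (Derive cz t + cx t * Derive cy t)
      = - (cx t * Derive cy t) - Derive_n cx 2 t / lam
    /\ Derive (fun s => Derive cz s + cx s * Derive cy s) t = Derive cx t / lam.
Proof.
intros Hl Sx Sy Sz HM t.
assert (Hl0 : lam <> 0) by lra.
set (a := fun k : nat => match k with 0%nat => cx t | 1%nat => 1 | _ => 0 end).
set (b := fun k : nat => match k with 0%nat => Derive cz t + cx t * Derive cy t
   | 1%nat => Derive cy t | _ => Derive cx t / lam end).
assert (Ha : forall k, (k < 3)%nat -> frameE lam (cx t) a k = V2 k).
{ intros k Hk; destruct k as [|[|[|k]]]; try lia;
  unfold frameE, sum3, a, frame_e, V2, kron; simpl; ring. }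
assert (Hb : forall k, (k < 3)%nat -> frameE lam (cx t) b k = Derive (ccoord cx cy cz k) t).
{ intros k Hk; destruct k as [|[|[|k]]]; try lia;
  unfold frameE, sum3, b, frame_e, V2, kron; simpl; field; auto. }
pose proof (HM t a b Ha Hb) as H.
assert (E0 := H 0%nat ltac:(lia)).
assert (E1 := H 1%nat ltac:(lia)).
assert (E2 := H 2%nat ltac:(lia)).
unfold cov_acc, sum3 in E0, E1, E2.
rewrite !Gamma_eq in E0, E1, E2 by (auto; lia).
unfold frameE, sum3, wedge, a, b, frame_e, kron, Gam in E0, E1, E2. simpl in E0, E1, E2.
assert (Dx : ex_derive cx t) by (apply (Sx 1%nat)).
assert (Dy : ex_derive cy t) by (apply (Sy 1%nat)).
assert (Ddy : ex_derive (Derive cy) t) by (apply (Sy 2%nat)).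
assert (Ddz : ex_derive (Derive cz) t) by (apply (Sz 2%nat)).
rewrite Derive_plus; [| exact Ddz | apply ex_derive_mult; auto].
rewrite Derive_mult; auto.
change (Derive (Derive cz) t) with (Derive_n cz 2 t).
change (Derive (Derive cy) t) with (Derive_n cy 2 t).
change (Derive (Derive cx) t) with (Derive_n cx 2 t) in *.
simpl Derive_n in *.
set (X2 := Derive (fun x : R => Derive (fun x0 : R => cx x0) x) t) in *.
set (Y2 := Derive (fun x : R => Derive (fun x0 : R => cy x0) x) t) in *.
set (Z2 := Derive (fun x : R => Derive (fun x0 : R => cz x0) x) t) in *.
set (x1 := Derive cx t) in *. set (y1 := Derive cy t) in *. set (z1 := Derive cz t) in *.
set (x0 := cx t) in *.
assert (EX : X2 = lam * z1 - lam^2 * y1 * (z1 + x0 * y1)) by (apply Rminus_diag_uniq; match type of E0 with ?L = ?Rr => replace (X2 - _) with (L - Rr) by (field; auto) end; rewrite E0; ring).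
assert (EY : Y2 = - x0 * x1 / lam - x1 * (z1 + x0 * y1)) by (apply Rminus_diag_uniq; match type of E1 with ?L = ?Rr => replace (Y2 - _) with (L - Rr) by (field; auto) end; rewrite E1; ring).
assert (EZ : Z2 = x1 * (1 + x0^2) / lam - (1 - x0^2) * x1 * y1 + x0 * x1 * z1) by (apply Rminus_diag_uniq; match type of E2 with ?L = ?Rr => replace (Z2 - _) with (L - Rr) by (field; auto) end; rewrite E2; ring).
rewrite EX, EY, EZ. split; [|split]; field; auto.
Qed.
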